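(* Let $\mathcal G$ be a strongly connected directed graph with no self loops, vertex set $\mathcal V=\{1,\dots,n\}$ and edge set $\mathcal E=\{1,\dots,m\}$. Let $B=S-D$ be its incidence matrix, let $Q=DB^\mathsf{T}$, and let $W$ and $Q^\ddagger$ be as in the context. Let $\omega^{\mathrm u}\in\mathbb{R}^n$ be constant. Consider the dynamics \[ \dot{\tilde\theta}(t)=\omega^{\mathrm u}+c(t),\qquad \tilde\beta(t)=B^\mathsf{T}\tilde\theta(t),\qquad y(t)=D\tilde\beta(t). \] Let $\mathcal T$ be an outward directed spanning tree with root $r$, and let $g_1,\dots,g_{n-1}$ be an ordering of its edges such that $g_a\prec g_b$ implies $a<b$. Let $k,k_2>0$. Let $0<t_1<\dots<t_n$ satisfy $t_{j+1}-t_j>|\tilde\beta_{g_j}(t_j)|/k_2$ for each $j$. For each $i\neq r$, let $j(i)$ be the unique index with $\mathrm{dst}(g_{j(i)})=i$. Let the control be \[ c_i(t)=\begin{cases} k\,y_i(t) & t<t_1,\\ k\,y_i(t_1)+k_2\,\mathrm{sign}\big(\tilde\beta_{g_{j(i)}}(t)\big) & i\neq r,\ t_{j(i)}\le t<t_{j(i)+1},\\ k\,y_i(t_1) & \text{otherwise.}\end{cases} \] Assume \[ \tilde\beta(t_1)=-k^{-1}B^\mathsf{T}Q^\ddagger\omega^{\mathrm u} \qquad\text{and}\qquad \omega^{\mathrm u}+k\,y(t_1)=W\omega^{\mathrm u}. \] Then $\tilde\beta_a(t_n)=0$ for every edge $a\in\mathcal T$.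
   Context: The matrices $S,D\in\mathbb{R}^{n\times m}$ are defined by $S_{ie}=1$ if node $i$ is the source of edge $e$ and $0$ otherwise, and $D_{ie}=1$ if node $i$ is the destination of edge $e$ and $0$ otherwise. The vector $\mathbf{1}$ is the all-ones vector. The matrix $Q=DB^\mathsf{T}$ is an irreducible rate matrix. Let $z>0$ satisfy $z^\mathsf{T}Q=0$ and $\mathbf{1}^\mathsf{T}z=1$, and set $W=\mathbf{1}z^\mathsf{T}$. Write $Q=T\begin{bmatrix}0&0\\0&\Lambda\end{bmatrix}T^{-1}$, where $T$ is invertible with first column $\mathbf{1}$, the first row of $T^{-1}$ is $z^\mathsf{T}$, and $\Lambda$ is invertible. Define $Q^\ddagger=T\begin{bmatrix}0&0\\0&\Lambda^{-1}\end{bmatrix}T^{-1}$. An outward directed spanning tree with root $r$ is a set $\mathcal T$ of $n-1$ edges such that every vertex is reachable from $r$ by a directed path in $\mathcal T$, and each vertex other than $r$ is the destination of exactly one edge of $\mathcal T$. For $f,g\in\mathcal T$, $f\prec g$ means there is a directed walk of nonzero length in $\mathcal T$ from $\mathrm{dst}(f)$ to $\mathrm{dst}(g)$. The convention $\mathrm{sign}(0)=0$ is used. *)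

(* Defs.v *)
From HB Require Import structures.
From mathcomp Require Import all_boot all_order all_algebra.
From mathcomp Require Import all_classical all_reals all_analysis.
Set Implicit Arguments. Unset Strict Implicit. Unset Printing Implicit Defensive.
Import Order.TTheory GRing.Theory Num.Theory.
Local Open Scope ring_scope.

Section Graph.
Variables (R : realType) (N m : nat).
Variables (src dst : 'I_m -> 'I_N).

Definition Smx : 'M[R]_(N, m) := \matrix_(i, e) (src e == i)%:R.
Definition Dmx : 'M[R]_(N, m) := \matrix_(i, e) (dst e == i)%:R.
Definition Bmx : 'M[R]_(N, m) := Smx - Dmx.
Definition Qmx : 'M[R]_N := Dmx *m Bmx^T.

Definition adj : rel 'I_N := fun u v => [exists e, (src e == u) && (dst e == v)].
Definition strongly_connected : Prop := forall u v : 'I_N, connect adj u v.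
Definition no_self_loops : Prop := forall e : 'I_m, src e != dst e.

Definition tadj (T : {set 'I_m}) : rel 'I_N :=
  fun u v => [exists e in T, (src e == u) && (dst e == v)].

Definition out_spanning_tree (T : {set 'I_m}) (r : 'I_N) : Prop :=
  [/\ #|T| = N.-1,
      (forall v : 'I_N, connect (tadj T) r v) &
      (forall v : 'I_N, v != r -> #|[set e in T | dst e == v]| = 1%N)].

(* f ≺ g : directed walk of nonzero length in T from dst f to dst g *)
Definition tprec (T : {set 'I_m}) (f g : 'I_m) : bool :=
  [exists v, tadj T (dst f) v && connect (tadj T) v (dst g)].
End Graph.

Definition is_Qdagger (R : realType) (p : nat) (Q Qd : 'M[R]_(1 + p))
    (z : 'cV[R]_(1 + p)) : Prop :=
  exists (T : 'M[R]_(1 + p)) (L : 'M[R]_p),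
    [/\ T \in unitmx, lsubmx T = const_mx 1, usubmx (invmx T) = z^T
      & L \in unitmx] /\
    Q = T *m block_mx 0 0 0 L *m invmx T /\
    Qd = T *m block_mx 0 0 0 (invmx L) *m invmx T.

(* The control law c(t) (0-indexed: times tau 0 < ... < tau p, tree edges
   g 0, ..., g (p-1); edge g j is active on [tau j, tau (j+1))). *)
Definition ctrl (R : realType) (p m : nat) (dst : 'I_m -> 'I_(1 + p))
    (g : 'I_p -> 'I_m) (r : 'I_(1 + p)) (k k2 : R) (tau : nat -> R)
    (y : R -> 'cV[R]_(1 + p)) (bta : R -> 'cV[R]_m)
    (i : 'I_(1 + p)) (t : R) : R :=
  if t < tau 0%N then k * y t i 0
  else match [pick j : 'I_p | dst (g j) == i] with
       | Some j => if (i != r) && (tau j <= t) && (t < tau j.+1)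
                   then k * y (tau 0%N) i 0 + k2 * Num.sg (bta t (g j) 0)
                   else k * y (tau 0%N) i 0
       | None => k * y (tau 0%N) i 0
       end.

Definition beta_of (R : realType) (N m : nat) (src dst : 'I_m -> 'I_N)
    (theta : R -> 'cV[R]_N) (t : R) : 'cV[R]_m := (Bmx R src dst)^T *m theta t.
Definition y_of (R : realType) (N m : nat) (src dst : 'I_m -> 'I_N)
    (theta : R -> 'cV[R]_N) (t : R) : 'cV[R]_N :=
  Dmx R dst *m beta_of src dst theta t.

(* Main.v *)
Require Import Defs.
From HB Require Import structures.
From mathcomp Require Import all_boot all_order all_algebra.
From mathcomp Require Import all_classical all_reals all_analysis.
From mathcomp Require Import ring lra.
Import Order.TTheory GRing.Theory Num.Theory numFieldNormedType.Exports.
Local Open Scope classical_set_scope.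
Local Open Scope ring_scope.
Lemma nincr_fin (R : realType) (f d : R -> R) (S : seq R) : forall a b,
  a <= b -> {within [set x | a <= x <= b], continuous f} ->
  (forall t, a < t < b -> t \notin S -> is_derive t 1 f (d t) /\ d t <= 0) ->
  f b <= f a.
Proof.
elim: S => [|s S IH] a b ab cf hd.
  move: ab; rewrite le_eqVlt => /orP[/eqP->|ab]; first exact: lexx.
  have h1 : forall x, x \in `]a, b[ -> is_derive x 1 f (d x).
    by move=> x; rewrite in_itv /= => /hd => /(_ isT) [].
  have h2 : {within `[a, b], continuous f}.
    apply: continuous_subspaceW cf => x /=; by rewrite in_itv.
  have [c] := @MVT R f d a b ab h1 h2.
  move=> /[dup] cI; rewrite in_itv /= => /hd /(_ isT) [_ dc] e.
  rewrite -subr_le0 e; apply: (mulr_le0_ge0 dc).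
  by move: cI; rewrite in_itv /= subr_ge0 => /andP[h3 h4]; apply: ltW; apply: lt_trans h4.
have [sab|sab] := boolP (a < s < b).
  move/andP: sab => [ias isb].
  apply: (@le_trans _ _ (f s)).
    apply: (IH s b) => //; first exact: ltW.
      apply: continuous_subspaceW cf => x /= /andP[h1 h2].
      by rewrite h2 (le_trans (ltW ias) h1).
    move=> t /andP[h1 h2] tS; apply: hd; first by rewrite h2 (lt_trans ias h1).
    by rewrite in_cons negb_or tS andbT; rewrite gt_eqF.
  apply: (IH a s) => //; first exact: ltW.
    apply: continuous_subspaceW cf => x /= /andP[h1 h2].
    by rewrite h1 (le_trans h2 (ltW isb)).
  move=> t /andP[h1 h2] tS; apply: hd; first by rewrite h1 (lt_trans h2 isb).
  by rewrite in_cons negb_or tS andbT; rewrite lt_eqF.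
apply: (IH a b) => // t tab tS; apply: hd => //.
rewrite in_cons negb_or tS andbT; apply/eqP => ts; move: sab; by rewrite -ts tab.
Qed.
Lemma cont_sq (R : realType) (f : R -> R) (A : set R) :
  {within A, continuous f} -> {within A, continuous (fun y => f y ^+ 2)}.
Proof.
move=> cf y. have := continuousM (cf y) (cf y).
have -> : (fun y => f y ^+ 2) = (f \* f) by apply/funext => z /=; rewrite expr2.
done.
Qed.

Lemma cont_lin (R : realType) (f : R -> R) (A : set R) (k : R) :
  {within A, continuous f} -> {within A, continuous (fun y => f y + k * y)}.
Proof.
move=> cf.
have hk : {within A, continuous (fun y : R => k * y)}.
  apply: continuous_subspaceT => z. apply: continuousM; [exact: cst_continuous | idtac]. exact: cvg_id.
move=> y; apply: continuousD; [exact: cf | exact: hk].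
Qed.

Lemma der_sq (R : realType) (f : R -> R) (x df : R) :
  is_derive x 1 f df -> is_derive x 1 (fun y => f y ^+ 2) (2 * f x * df).
Proof.
move=> h. have := is_deriveX 2 h.
have -> : (fun y => f y ^+ 2) = (f ^+ 2) by apply/funext => z /=.
move=> h2; apply: is_derive_eq h2 _. rewrite /= expr1; rewrite /GRing.scale /=. ring.
Qed.

Lemma der_lin (R : realType) (f : R -> R) (x df k : R) :
  is_derive x 1 f df -> is_derive x 1 (fun y => f y + k * y) (df + k).
Proof.
move=> h. have := is_deriveD h (is_deriveZ k (is_derive_id x 1)).
have -> : (fun y => f y + k * y) = (f + k *: id) by apply/funext => z /=.
move=> h2; apply: is_derive_eq h2 _. rewrite /GRing.scale /=. ring.
Qed.

Lemma sg_le0 (R : realType) (f : R -> R) (S : seq R) (k2 a b : R) :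
  0 < k2 -> a < b -> {within [set x | a <= x <= b], continuous f} ->
  (forall t, a < t < b -> t \notin S -> is_derive t 1 f (- (k2 * Num.sg (f t)))) ->
  `|f a| < k2 * (b - a) -> f b <= 0.
Proof.
move=> k2p ab cf hd fa.
rewrite leNgt; apply/negP => fb.
have sq : forall t, a <= t <= b -> f b ^+ 2 <= f t ^+ 2.
  move=> t /andP[hat tb].
  apply: (@nincr_fin R (fun y => f y ^+ 2) (fun y => 2 * f y * (- (k2 * Num.sg (f y)))) S t b tb).
    apply: cont_sq; apply: continuous_subspaceW cf => x /= /andP[h1 h2].
    by rewrite h2 (le_trans hat h1).
  move=> s /andP[h1 h2] sS; split.
    apply: der_sq; apply: hd sS; by rewrite h2 (le_lt_trans hat h1).
  have -> : 2 * f s * - (k2 * Num.sg (f s)) = - (2 * k2 * (Num.sg (f s) * f s)) by ring.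
  rewrite -normrEsg oppr_le0; apply: mulr_ge0 => //; apply: mulr_ge0 => //; exact: ltW.
have pos : forall t, a <= t <= b -> 0 < f t.
  move=> t /andP[hat tb]; rewrite ltNge; apply/negP => ft.
  have [c cI fc] : exists2 c, c \in `[t, b] & f c = 0.
    apply: IVT => //.
      apply: continuous_subspaceW cf => x /=; rewrite in_itv /= => /andP[h1 h2].
      by rewrite h2 (le_trans hat h1).
    by rewrite ge_min ft le_max (ltW fb) orbT.
  move: cI; rewrite in_itv /= => /andP[h1 h2].
  have := sq c; rewrite h2 (le_trans hat h1) fc => /(_ isT).
  rewrite expr0n /= => h; have : 0 < f b ^+ 2 by apply: exprn_gt0.
  by rewrite ltNge h.
have hc : {within [set x | a <= x <= b], continuous (fun y => f y + k2 * y)}.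
  exact: cont_lin cf.
have hd2 : forall t, a < t < b -> t \notin S ->
   is_derive t 1 (fun y => f y + k2 * y) (- (k2 * Num.sg (f t)) + k2) /\ - (k2 * Num.sg (f t)) + k2 <= 0.
  move=> t /andP[h1 h2] tS; split; first by apply: der_lin; apply: hd => //; rewrite h1 h2.
  by rewrite gtr0_sg ?mulr1 ?addNr // pos // (ltW h1) (ltW h2).
have h := @nincr_fin R (fun y => f y + k2 * y) (fun y => - (k2 * Num.sg (f y)) + k2) S a b (ltW ab) hc hd2.
simpl in h. have : f a <= `|f a| := ler_norm _.
lra.
Qed.

Lemma const_fin (R : realType) (f : R -> R) (S : seq R) (a b : R) :
  a <= b -> {within [set x | a <= x <= b], continuous f} ->
  (forall t, a < t < b -> t \notin S -> is_derive t 1 f 0) -> f b = f a.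
Proof.
move=> ab cf hd; apply/eqP; rewrite eq_le; apply/andP; split.
  apply: (@nincr_fin R f (fun=> 0) S a b ab cf) => t h1 h2; split => //; exact: hd.
have cN : {within [set x | a <= x <= b], continuous (fun s => - f s)}.
  move=> y; apply: continuousN; exact: cf.
have hN : forall t, a < t < b -> t \notin S -> is_derive t 1 (fun s => - f s) 0 /\ (0:R) <= 0.
  move=> t h1 h2; split => //.
  have := is_deriveN (hd t h1 h2).
  have -> : (fun s => - f s) = - f by apply/funext.
  by rewrite oppr0.
have := @nincr_fin R (fun s => - f s) (fun=> 0) S a b ab cN hN.
by rewrite lerN2.
Qed.

Lemma cont_sub (R : realType) (f g : R -> R) (A : set R) :
  {within A, continuous f} -> {within A, continuous g} ->
  {within A, continuous (fun s => f s - g s)}.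
Proof. move=> cf cg y; apply: continuousB; [exact: cf | exact: cg]. Qed.

Lemma der_sub (R : realType) (f g : R -> R) (x a b : R) :
  is_derive x 1 f a -> is_derive x 1 g b -> is_derive x 1 (fun s => f s - g s) (a - b).
Proof.
move=> hf hg; have := is_deriveB hf hg.
by have -> : (fun s => f s - g s) = f - g by apply/funext.
Qed.
Section G.
Variables (p m : nat) (src dst : 'I_m -> 'I_(1 + p)) (Tset : {set 'I_m})
  (r : 'I_(1 + p)) (g : 'I_p -> 'I_m).
Hypothesis nsl : no_self_loops src dst.
Hypothesis tree : out_spanning_tree src dst Tset r.
Hypothesis ginj : injective g.
Hypothesis hT : Tset = [set g j | j in 'I_p]%SET.
Hypothesis hord : forall a b : 'I_p, tprec src dst Tset (g a) (g b) -> (a < b)%N.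

Lemma gT j : g j \in Tset.
Proof. by rewrite hT imset_f. Qed.

Lemma tadj_g j : tadj src dst Tset (src (g j)) (dst (g j)).
Proof. by apply/existsP; exists (g j); rewrite gT !eqxx. Qed.

Lemma G3 j l : src (g j) = dst (g l) -> (l < j)%N.
Proof.
move=> h; apply: hord; apply/existsP; exists (dst (g j)); rewrite connect0 andbT.
by rewrite -h tadj_g.
Qed.

Lemma G1 j : dst (g j) != r.
Proof.
apply/eqP => hr; case: tree => _ conn _.
case/connectP: (conn (src (g j))) => q; case: q => [|v q] /=.
  by move=> _ h; move: (nsl (g j)); rewrite h hr eqxx.
move=> /andP[h1 h2] hl.
have : (j < j)%N; last by rewrite ltnn.
apply: hord; apply/existsP; exists v; rewrite hr h1 /=.
apply: (connect_trans (y := src (g j))); last by rewrite -hr; exact: connect1 (tadj_g j).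
by apply/connectP; exists q.
Qed.

Lemma G2 a b : dst (g a) = dst (g b) -> a = b.
Proof.
move=> h; case: tree => _ _ card1.
have /cards1P [x hx] : #|[set e in Tset | dst e == dst (g a)]| == 1%N.
  by rewrite card1 // G1.
have ha : g a \in [set e in Tset | dst e == dst (g a)] by rewrite inE gT eqxx.
have hb : g b \in [set e in Tset | dst e == dst (g a)] by rewrite inE gT h eqxx.
move: ha hb; rewrite hx !inE => /eqP ha /eqP hb; apply: ginj; by rewrite ha hb.
Qed.
End G.
Theorem lemma4 (R : realType) (p m : nat) (src dst : 'I_m -> 'I_(1 + p))
    (z : 'cV[R]_(1 + p)) (Qd : 'M[R]_(1 + p)) (omega : 'cV[R]_(1 + p))
    (Tset : {set 'I_m}) (r : 'I_(1 + p)) (g : 'I_p -> 'I_m)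
    (k k2 : R) (tau : nat -> R) (theta : R -> 'cV[R]_(1 + p)) :
  no_self_loops src dst ->
  strongly_connected src dst ->
  (forall i, 0 < z i 0) ->
  z^T *m Qmx R src dst = 0 ->
  (const_mx 1)^T *m z = 1 ->
  is_Qdagger (Qmx R src dst) Qd z ->
  out_spanning_tree src dst Tset r ->
  injective g ->
  Tset = [set g j | j in 'I_p]%SET ->
  (forall a b : 'I_p, tprec src dst Tset (g a) (g b) -> (a < b)%N) ->
  0 < k -> 0 < k2 ->
  0 < tau 0%N ->
  (forall j, (j < p)%N -> tau j < tau j.+1) ->
  (forall j : 'I_p,
     `|beta_of src dst theta (tau j) (g j) 0| / k2 < tau j.+1 - tau j) ->
  (* theta solves the closed-loop dynamics on [0, tau p] *)
  (forall i, {within [set x : R | 0 <= x <= tau p], continuous (fun t => theta t i 0)}) ->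
  (exists S : seq R, forall t, 0 < t < tau p -> t \notin S -> forall i,
     is_derive t 1 (fun s => theta s i 0)
       (omega i 0 + ctrl dst g r k k2 tau (y_of src dst theta)
                      (beta_of src dst theta) i t)) ->
  beta_of src dst theta (tau 0%N) = - k^-1 *: ((Bmx R src dst)^T *m Qd *m omega) ->
  omega + k *: y_of src dst theta (tau 0%N) = (const_mx 1 *m z^T) *m omega ->
  forall a, a \in Tset -> beta_of src dst theta (tau p) a 0 = 0.
Proof.
move=> nsl _ _ _ _ _ tree ginj hT hord kp k2p tau0 tauinc hbeta ctheta [S hS] _ hy a0 aT.
have taumono : forall u v, (u <= v)%N -> (v <= p)%N -> tau u <= tau v.
  move=> u v; elim: v => [|v IH]; first by rewrite leqn0 => /eqP ->.
  rewrite leq_eqVlt => /orP[/eqP -> // | ]; rewrite ltnS => uv vp.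
  apply: le_trans (IH uv (ltnW vp)) _; exact/ltW/tauinc.
have betaE : forall t e, beta_of src dst theta t e 0 = theta t (src e) 0 - theta t (dst e) 0.
  move=> t e; rewrite /beta_of /Bmx mxE.
  under eq_bigr => i _ do rewrite !mxE mulrBl.
  rewrite sumrB (bigD1 (src e)) //= big1 ?addr0; last first.
    by move=> i /negbTE; rewrite eq_sym => ->; rewrite mul0r.
  rewrite (bigD1 (dst e)) //= big1 ?addr0; last first.
    by move=> i /negbTE; rewrite eq_sym => ->; rewrite mul0r.
  by rewrite !eqxx !mul1r.
have G1' := @G1 p m src dst Tset r g nsl tree hT hord.
have G2' := @G2 p m src dst Tset r g nsl tree ginj hT hord.
have G3' := @G3 p m src dst Tset g hT hord.
pose Kc i := omega i 0 + k * y_of src dst theta (tau 0%N) i 0.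
have Kceq : forall i, Kc i = Kc r.
  have e : forall i, Kc i = ((const_mx 1 *m z^T) *m omega) i 0.
    by move=> i; rewrite /Kc -hy !mxE.
  move=> i; rewrite !e !mxE; apply: eq_bigr => j _; rewrite !mxE; congr (_ * _).
  by apply: eq_bigr => l _; rewrite !mxE.
have ctrlE : forall (j : 'I_p) t i, tau j < t < tau j.+1 ->
    ctrl dst g r k k2 tau (y_of src dst theta) (beta_of src dst theta) i t =
    k * y_of src dst theta (tau 0%N) i 0 +
      (dst (g j) == i)%:R * (k2 * Num.sg (beta_of src dst theta t (g j) 0)).
  move=> j t i /andP[h1 h2]; rewrite /ctrl.
  have -> : (t < tau 0%N) = false.
    apply/negbTE; rewrite -leNgt; apply: le_trans (ltW h1).
    by apply: taumono => //; exact: ltnW (ltn_ord j).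
  case: pickP => [j' /eqP hj' | none].
    have [ejj|ne] := eqVneq j' j.
      by subst j'; rewrite -hj' G1' eqxx mul1r /= (ltW h1) h2.
    have -> : (dst (g j) == i) = false.
      apply/negbTE/eqP => h; move/eqP: ne; apply.
      by apply: G2'; rewrite h hj'.
    rewrite mul0r addr0; case: ifP => // /andP[/andP[_ c1] c2]; exfalso.
    case: (ltngtP j' j) => [lt|gt|eqj].
    - have := taumono _ _ lt (ltnW (ltn_ord j)) => h3.
      have := lt_trans (lt_le_trans c2 h3) h1; by rewrite ltxx.
    - have := taumono _ _ gt (ltnW (ltn_ord j')) => h3.
      have := lt_le_trans (le_lt_trans c1 h2) h3; by rewrite ltxx.
    - by move/eqP: ne; apply; apply: val_inj.
  by rewrite (none j) mul0r addr0.
have tauj : forall j : 'I_p, tau j.+1 <= tau p.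
  by move=> j; apply: taumono => //; exact: ltn_ord.
have tau0j : forall j : nat, (j <= p)%N -> tau 0%N <= tau j.
  by move=> j jp; apply: taumono.
have derth : forall (j : 'I_p) t i, tau j < t < tau j.+1 -> t \notin S ->
    is_derive t 1 (fun s => theta s i 0)
      (Kc i + (dst (g j) == i)%:R * (k2 * Num.sg (beta_of src dst theta t (g j) 0))).
  move=> j t i /[dup] tI /andP[h1 h2] tS.
  have t0 : 0 < t < tau p.
    rewrite (lt_le_trans h2 (tauj j)) andbT.
    apply: lt_le_trans tau0 (le_trans (tau0j j (ltnW (ltn_ord j))) (ltW h1)).
  apply: is_derive_eq (hS t t0 tS i) _.
  by rewrite (ctrlE j t i tI) addrA.
have derb : forall (j : 'I_p) t e, tau j < t < tau j.+1 -> t \notin S ->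
    is_derive t 1 (fun s => beta_of src dst theta s e 0)
      (((dst (g j) == src e)%:R - (dst (g j) == dst e)%:R) *
        (k2 * Num.sg (beta_of src dst theta t (g j) 0))).
  move=> j t e tI tS.
  have -> : (fun s => beta_of src dst theta s e 0) =
            (fun s => theta s (src e) 0 - theta s (dst e) 0).
    by apply/funext => s; exact: betaE.
  apply: is_derive_eq; first exact: der_sub (derth j t _ tI tS) (derth j t _ tI tS).
  rewrite (Kceq (src e)) (Kceq (dst e)); ring.
have contb : forall e (l : nat), (l < p)%N ->
    {within [set x | tau l <= x <= tau l.+1], continuous (fun s => beta_of src dst theta s e 0)}.
  move=> e l lp.
  have -> : (fun s => beta_of src dst theta s e 0) =
            (fun s => theta s (src e) 0 - theta s (dst e) 0).
    by apply/funext => s; exact: betaE.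
  have sub : [set x | tau l <= x <= tau l.+1] `<=` [set x : R | 0 <= x <= tau p].
    move=> x /= /andP[h1 h2]; apply/andP; split.
      exact: le_trans (ltW tau0) (le_trans (tau0j l (ltnW lp)) h1).
    exact: le_trans h2 (taumono _ _ lp (leqnn p)).
  apply: cont_sub; exact: continuous_subspaceW sub (ctheta _).
have stepA : forall j0 : 'I_p, beta_of src dst theta (tau j0.+1) (g j0) 0 = 0.
  move=> j0; pose F := fun s => beta_of src dst theta s (g j0) 0.
  have ab : tau j0 < tau j0.+1 := tauinc _ (ltn_ord j0).
  have hF : forall t, tau j0 < t < tau j0.+1 -> t \notin S ->
      is_derive t 1 F (- (k2 * Num.sg (F t))).
    move=> t tI tS; apply: is_derive_eq (derb j0 t (g j0) tI tS) _.
    by rewrite eq_sym (negbTE (nsl _)) eqxx sub0r mulN1r.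
  have hfa : `|F (tau j0)| < k2 * (tau j0.+1 - tau j0).
    by have := hbeta j0; rewrite ltr_pdivrMr // mulrC.
  have cF := contb (g j0) _ (ltn_ord j0).
  apply/eqP; rewrite eq_le; apply/andP; split.
    exact: (@sg_le0 R F S k2 _ _ k2p ab cF hF hfa).
  have cN : {within [set x | tau j0 <= x <= tau j0.+1], continuous (fun s => - F s)}.
    by move=> y; apply: continuousN; exact: cF.
  have hN : forall t, tau j0 < t < tau j0.+1 -> t \notin S ->
      is_derive t 1 (fun s => - F s) (- (k2 * Num.sg (- F t))).
    move=> t tI tS; have := is_deriveN (hF t tI tS).
    have -> : (fun s => - F s) = - F by apply/funext.
    by rewrite sgrN mulrN.
  have hNa : `|- F (tau j0)| < k2 * (tau j0.+1 - tau j0) by rewrite normrN.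
  have := @sg_le0 R (fun s => - F s) S k2 _ _ k2p ab cN hN hNa.
  by rewrite oppr_le0.
have stepB : forall (j0 : 'I_p) l, (j0 < l)%N -> (l <= p)%N ->
    beta_of src dst theta (tau l) (g j0) 0 = 0.
  move=> j0; elim => [//|l IH] hl lp.
  move: hl; rewrite ltnS leq_eqVlt => /orP[/eqP <- | hl]; first exact: stepA.
  have lp' : (l < p)%N := lp.
  rewrite -(IH hl (ltnW lp)).
  apply: (@const_fin R (fun s => beta_of src dst theta s (g j0) 0) S); first exact/ltW/tauinc.
    exact: contb.
  move=> t tI tS; apply: is_derive_eq (derb (Ordinal lp') t (g j0) tI tS) _.
  have -> : (dst (g (Ordinal lp')) == src (g j0)) = false.
    apply/negbTE/eqP => h; have := G3' j0 (Ordinal lp') (esym h) => /=.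
    by rewrite ltnNge (ltnW hl).
  have -> : (dst (g (Ordinal lp')) == dst (g j0)) = false.
    apply/negbTE/eqP => h; have := G2' _ _ h => /(congr1 val) /= e.
    by move: hl; rewrite e ltnn.
  by rewrite subrr mul0r.
move: aT; rewrite hT => /imsetP [j _ ->].
exact: stepB (ltn_ord j) (leqnn p).
Qed.
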